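(* Let $G\le\mathrm{Aut}(\mathcal{T}_d)$ be a finitely generated, persistent, finite-state self-similar group. Then there exists a quasi-retraction $V_d(G)\to G$.
   Context: Let $X=\{1,\dots,d\}$ ($d\ge2$) with its usual order; $X^*$ is the vertex set of the rooted $d$-ary tree $\mathcal{T}_d$, ordered lexicographically. Every $f\in\mathrm{Aut}(\mathcal{T}_d)$ has a wreath recursion $f=\rho(f)(f_1,\dots,f_d)$ with $\rho(f)\in S_d$, $f_i$ determined by $f(iw)=\rho(f)(i)f_i(w)$; the states of $f$ form the smallest set containing $f$ and closed under $f\mapsto f_i$. $G$ is self-similar if it contains all states of its elements; finite-state if each element has finitely many states; persistent if there is $i$ such that $g_i=g$ for every $g\in G$. With $X^\omega$ the infinite words, for finite complete rooted subtrees $T_-,T_+$ with $n$ leaves $u_1,\dots,u_n$, $v_1,\dots,v_n$ (lexicographic order), $\sigma\in S_n$, $g_i\in G$, $[T_-,\sigma(g_1,\dots,g_n),T_+]$ is the homeomorphism of $X^\omega$ with $v_iw\mapsto u_{\sigma(i)}g_i(w)$; $V_d(G)$ is the group of all these (it is generated by the finitely generated Higman–Thompson group $V_d$, the case of all $g_i$ trivial, together with a copy of $G$, so it is finitely generated when $G$ is). For finitely generated groups $H,Q$ with word metrics $d_H,d_Q$, a map $r\colon H\to Q$ is a quasi-retraction if there are $C\ge1$, $D\ge0$ and a map $\iota\colon Q\to H$ such that $r$ and $\iota$ are $(C,D)$-Lipschitz (i.e. $d(\phi(x),\phi(x'))\le C d(x,x')+D$) and $d_Q(r\iota(x),x)\le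 D$ for all $x\in Q$. *)

(* Defs.v *)
From mathcomp Require Import all_boot all_fingroup.
From Stdlib Require List.
Set Implicit Arguments. Unset Strict Implicit. Unset Printing Implicit Defensive.

(* Alphabet X = {1,...,d} is modelled by 'I_d = {0,...,d-1} with its usual order. *)
(* Vertices of the rooted d-ary tree T_d = finite words X^*. *)
Definition word (d : nat) := seq 'I_d.
Definition tmap (d : nat) := word d -> word d.
Definition iword (d : nat) := nat -> 'I_d.

Definition is_aut (d : nat) (f : tmap d) : Prop :=
  bijective f /\ (forall w, size (f w) = size w)
  /\ (forall w n, f (take n w) = take n (f w)).

Definition aut_subgroup (d : nat) (G : tmap d -> Prop) : Prop :=
  (forall g, G g -> is_aut g) /\ G id
  /\ (forall g h, G g -> G h -> G (g \o h))
  /\ (forall g, G g -> exists h, G h /\ cancel g h /\ cancel h g).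

(* Section (state) of g at the vertex u: g (u w) = g(u) (sect g u)(w). *)
Definition sect (d : nat) (g : tmap d) (u : word d) : tmap d :=
  fun w => drop (size u) (g (u ++ w)).

Inductive is_state (d : nat) (g : tmap d) : tmap d -> Prop :=
  | st_self : is_state g g
  | st_next (h : tmap d) (i : 'I_d) : is_state g h -> is_state g (sect h [:: i]).

Definition self_similar (d : nat) (G : tmap d -> Prop) : Prop :=
  forall g h, G g -> is_state g h -> G h.

Definition finite_state (d : nat) (G : tmap d -> Prop) : Prop :=
  forall g, G g -> exists (n : nat) (k : nat -> tmap d),
    forall h, is_state g h -> exists i, (i < n)%N /\ h = k i.

Definition persistent (d : nat) (G : tmap d -> Prop) : Prop :=
  exists i : 'I_d, forall g, G g -> sect g [:: i] = g.

Fixpoint lexlt (d : nat) (u v : word d) : bool :=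
  match u, v with
  | [::], [::] => false
  | [::], _ :: _ => true
  | _ :: _, [::] => false
  | x :: u', y :: v' => (nat_of_ord x < nat_of_ord y)%N || ((x == y) && lexlt u' v')
  end.

Definition complete_subtree (d : nat) (T : seq (word d)) : Prop :=
  [::] \in T
  /\ (forall (v : word d) (x : 'I_d), rcons v x \in T -> v \in T)
  /\ (forall v, v \in T ->
        (forall x : 'I_d, rcons v x \in T) \/ (forall x : 'I_d, rcons v x \notin T)).

Definition leaves_list (d : nat) (T : seq (word d)) (ls : seq (word d)) : Prop :=
  sorted (@lexlt d) ls
  /\ forall v, v \in ls <-> (v \in T /\ forall x : 'I_d, rcons v x \notin T).

Definition cat_iw (d : nat) (u : word d) (w : iword d) : iword d :=
  fun n => if (n < size u)%N then nth (w 0%N) u n else w (n - size u)%N.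

Definition act_inf (d : nat) (g : tmap d) (w : iword d) : iword d :=
  fun n => nth (w n) (g (mkseq w n.+1)) n.

(* f is an element [T_-, sigma(g_1,...,g_n), T_+] of V_d(G):
   v_i w |-> u_{sigma(i)} g_i(w)   (indices 0-based here). *)
Definition in_V (d : nat) (G : tmap d -> Prop) (f : iword d -> iword d) : Prop :=
  exists (n : nat) (Tm Tp us vs : seq (word d)) (s : 'S_n) (gs : 'I_n -> tmap d),
    complete_subtree Tm /\ complete_subtree Tp
    /\ leaves_list Tm us /\ leaves_list Tp vs
    /\ size us = n /\ size vs = n
    /\ (forall i, G (gs i))
    /\ forall (i : 'I_n) (w : iword d),
         f (cat_iw (nth [::] vs i) w) = cat_iw (nth [::] us (s i)) (act_inf (gs i) w).

Definition lprod (A : Type) (L : seq (A -> A)) : A -> A :=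
  foldr (fun s t => s \o t) id L.

Definition gen_set (A : Type) (H : (A -> A) -> Prop) (S : seq (A -> A)) : Prop :=
  (forall s, List.In s S -> H s)
  /\ (forall s, List.In s S -> exists t, List.In t S /\ cancel s t /\ cancel t s)
  /\ (forall h, H h -> exists L, (forall s, List.In s L -> List.In s S) /\ h = lprod L).

Definition fin_gen (A : Type) (H : (A -> A) -> Prop) : Prop :=
  exists S, gen_set H S.

(* d_S(x, y) <= n, for the word metric d_S(x,y) = |x^-1 y|_S. *)
Definition wdist_le (A : Type) (S : seq (A -> A)) (x y : A -> A) (n : nat) : Prop :=
  exists L, (forall s, List.In s L -> List.In s S) /\ (size L <= n)%N /\ y = x \o lprod L.

Definition lipschitz (A B : Type) (H : (A -> A) -> Prop) (SH : seq (A -> A))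
  (SQ : seq (B -> B)) (phi : (A -> A) -> (B -> B)) (C D : nat) : Prop :=
  forall x x' n, H x -> H x' -> wdist_le SH x x' n -> wdist_le SQ (phi x) (phi x') (C * n + D).

Definition quasi_retraction (A B : Type) (H : (A -> A) -> Prop) (SH : seq (A -> A))
  (Q : (B -> B) -> Prop) (SQ : seq (B -> B)) (r : (A -> A) -> (B -> B)) : Prop :=
  exists (C D : nat) (iota : (B -> B) -> (A -> A)),
    (1 <= C)%N
    /\ (forall x, H x -> Q (r x))
    /\ (forall y, Q y -> H (iota y))
    /\ lipschitz H SH SQ r C D
    /\ lipschitz Q SQ SH iota C D
    /\ forall y, Q y -> wdist_le SQ (r (iota y)) y D.

(* Main.v *)
Require Import Defs.
From mathcomp Require Import all_boot all_fingroup.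
From Stdlib Require Import ClassicalEpsilon FunctionalExtensionality Classical.
Set Implicit Arguments. Unset Strict Implicit. Unset Printing Implicit Defensive.

Section Basic.
Variable d : nat.
Implicit Types (u v : word d) (w : iword d) (g h : tmap d).

Lemma iw_ext (a b : iword d) : (forall n, a n = b n) -> a = b.
Proof. exact: functional_extensionality. Qed.

Lemma tm_ext (a b : tmap d) : (forall n, a n = b n) -> a = b.
Proof. exact: functional_extensionality. Qed.

Lemma cat_iw0 w : cat_iw [::] w = w.
Proof. by apply: iw_ext => n; rewrite /cat_iw ltn0 subn0. Qed.

Lemma cat_iw_cat u v w : cat_iw u (cat_iw v w) = cat_iw (u ++ v) w.
Proof.
apply: iw_ext => n; rewrite /cat_iw size_cat nth_cat.
case: ltnP => Hu.
  by rewrite (ltn_addr _ Hu); apply: set_nth_default.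
rewrite ltn_subLR // subnDA.
by case: ifP.
Qed.

Lemma cat_iw_inj u (a b : iword d) : cat_iw u a = cat_iw u b -> a = b.
Proof.
move=> E; apply: iw_ext => n.
have := congr1 (fun f => f (size u + n)) E; rewrite /cat_iw.
by rewrite ltnNge leq_addr /= addKn.
Qed.

Lemma mkseq_cat_iw u w k : k <= size u -> mkseq (cat_iw u w) k = take k u.
Proof.
move=> Hk; apply: (@eq_from_nth _ (w 0)).
  by rewrite size_mkseq size_take; case: ltnP => // H; apply/eqP; rewrite eqn_leq Hk.
move=> j; rewrite size_mkseq => Hj.
rewrite nth_mkseq // nth_take // /cat_iw (leq_trans Hj Hk).
by apply: set_nth_default; apply: leq_trans Hj Hk.
Qed.

Lemma mkseq_cat_iw_size u w : mkseq (cat_iw u w) (size u) = u.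
Proof. by rewrite mkseq_cat_iw // take_size. Qed.

Lemma cat_iw_prefix_eq u1 u2 a b : size u1 = size u2 ->
  cat_iw u1 a = cat_iw u2 b -> u1 = u2.
Proof.
move=> Hs E.
by rewrite -(mkseq_cat_iw_size u1 a) E Hs mkseq_cat_iw_size.
Qed.


Lemma mkseq_const (x : 'I_d) n : mkseq (fun _ => x) n = nseq n x.
Proof.
apply: (@eq_from_nth _ x); first by rewrite size_mkseq size_nseq.
by move=> j; rewrite size_mkseq => Hj; rewrite nth_mkseq // nth_nseq Hj.
Qed.

Lemma cat_nseq_const (x : 'I_d) n : cat_iw (nseq n x) (fun _ => x) = (fun _ => x).
Proof.
apply: iw_ext => k; rewrite /cat_iw size_nseq; case: ifP => // H.
by rewrite nth_nseq H.
Qed.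

End Basic.

Section Generic.

Definition short (A : Type) (S : seq (A -> A)) B (t : A -> A) :=
  exists L, (forall s, List.In s L -> List.In s S) /\ size L <= B /\ t = lprod L.

Lemma short_mono A (S : seq (A -> A)) B B' t : B <= B' -> short S B t -> short S B' t.
Proof. by move=> H [L [H1 [H2 H3]]]; exists L; split => //; split => //; apply: leq_trans H. Qed.

Lemma nat_bound (P : nat -> nat -> Prop) N :
  (forall x B B', B <= B' -> P x B -> P x B') ->
  (forall x, x < N -> exists B, P x B) -> exists B, forall x, x < N -> P x B.
Proof.
move=> Hm; elim: N => [|N IH] H; first by exists 0.
have [B1 HB1] := IH (fun x Hx => H x (ltnW Hx)).
have [B2 HB2] := H N (ltnSn N).
exists (maxn B1 B2) => x; rewrite ltnS leq_eqVlt => /orP [/eqP -> | Hx].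
  by apply: Hm (HB2); apply: leq_maxr.
by apply: Hm (HB1 _ Hx); apply: leq_maxl.
Qed.

Lemma list_bound (T : Type) (l : seq T) (P : T -> nat -> Prop) :
  (forall x B B', B <= B' -> P x B -> P x B') ->
  (forall x, List.In x l -> exists B, P x B) -> exists B, forall x, List.In x l -> P x B.
Proof.
move=> Hm; elim: l => [|a l IH] H; first by exists 0.
have [B1 HB1] := IH (fun x Hx => H x (or_intror Hx)).
have [B2 HB2] := H a (or_introl erefl).
exists (maxn B1 B2) => x /= [<- | Hx].
  by apply: Hm (HB2); apply: leq_maxr.
by apply: Hm (HB1 _ Hx); apply: leq_maxl.
Qed.

Lemma lprod_cat A (L1 L2 : seq (A -> A)) : lprod (L1 ++ L2) = lprod L1 \o lprod L2.
Proof. by elim: L1 => [|a L1 IH] //=; rewrite IH. Qed.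

Lemma wdist_trans A (S : seq (A -> A)) x y z a b :
  wdist_le S x y a -> wdist_le S y z b -> wdist_le S x z (a + b).
Proof.
move=> [L1 [H1 [S1 E1]]] [L2 [H2 [S2 E2]]].
exists (L1 ++ L2); split.
  by move=> s Hs; case: (List.in_app_or _ _ _ Hs) => ?; [apply: H1 | apply: H2].
by rewrite size_cat leq_add // E2 E1 lprod_cat.
Qed.

Lemma wdist_mono A (S : seq (A -> A)) x y a b : a <= b -> wdist_le S x y a -> wdist_le S x y b.
Proof. by move=> H [L [H1 [H2 H3]]]; exists L; split => //; split => //; apply: leq_trans H. Qed.

End Generic.

Section Aut.
Variable d : nat.
Implicit Types (u v : word d) (w : iword d) (g h : tmap d).

Lemma take_mkseq (f : nat -> 'I_d) m k : m <= k -> take m (mkseq f k) = mkseq f m.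
Proof. by move=> H; rewrite /mkseq -map_take take_iota (minn_idPl H). Qed.

Lemma aut_size g (y : word d) : is_aut g -> size (g y) = size y.
Proof. by case=> _ []. Qed.

Lemma aut_take g (y : word d) n : is_aut g -> g (take n y) = take n (g y).
Proof. by case=> _ [] _ ->. Qed.

Lemma aut_cat g u y : is_aut g -> g (u ++ y) = g u ++ sect g u y.
Proof.
move=> Ha; rewrite /sect.
have E : take (size u) (g (u ++ y)) = g u by rewrite -aut_take // take_size_cat.
by rewrite -{1}(cat_take_drop (size u) (g (u ++ y))) E.
Qed.

Lemma act_mkseq g w k : is_aut g -> mkseq (act_inf g w) k = g (mkseq w k).
Proof.
move=> Ha; apply: (@eq_from_nth _ (w 0)).
  by rewrite size_mkseq aut_size // size_mkseq.
move=> j; rewrite size_mkseq => Hj.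
rewrite nth_mkseq // /act_inf -(@take_mkseq w _ _ Hj) aut_take // nth_take //.
by apply: set_nth_default; rewrite aut_size // size_mkseq.
Qed.

Lemma act_comp g h : is_aut g -> is_aut h -> act_inf (g \o h) = act_inf g \o act_inf h.
Proof.
move=> Hg Hh; apply: functional_extensionality => w; apply: iw_ext => n.
change (act_inf (g \o h) w n = act_inf g (act_inf h w) n).
rewrite {2}/act_inf act_mkseq // /act_inf.
apply: set_nth_default; change (n < size (g (h (mkseq w n.+1)))).
by rewrite (@aut_size g) // (@aut_size h) // size_mkseq.
Qed.

Lemma act_id : act_inf (@id (word d)) = id.
Proof.
apply: functional_extensionality => w; apply: iw_ext => n.
by rewrite /act_inf /= nth_mkseq.
Qed.

Lemma mkseq_cat_iw_ge u w k : size u <= k -> mkseq (cat_iw u w) k = u ++ mkseq w (k - size u).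
Proof.
move=> Hk; apply: (@eq_from_nth _ (w 0)).
  by rewrite size_cat !size_mkseq subnKC.
move=> j; rewrite size_mkseq => Hj.
rewrite nth_mkseq // nth_cat /cat_iw; case: ifP => H.
  by apply: set_nth_default.
rewrite nth_mkseq //; rewrite ltn_subLR ?subnKC //; by rewrite leqNgt H.
Qed.

Lemma act_cat g u w : is_aut g ->
  act_inf g (cat_iw u w) = cat_iw (g u) (act_inf (sect g u) w).
Proof.
move=> Ha; apply: iw_ext => n.
rewrite /act_inf [RHS]/cat_iw (@aut_size g u) //.
case: ltnP => Hn.
  rewrite mkseq_cat_iw // aut_take // nth_take //.
  by apply: set_nth_default; rewrite (@aut_size g u).
rewrite mkseq_cat_iw_ge; last by apply: leq_trans Hn _.
rewrite aut_cat // nth_cat (@aut_size g u) // ltnNge Hn /= subSn //.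
by rewrite /cat_iw ltnNge Hn.
Qed.

Lemma sect_cat g u v : sect g (u ++ v) = sect (sect g u) v.
Proof. by apply: tm_ext => w; rewrite /sect -catA drop_drop size_cat addnC. Qed.

Lemma sect_nil g : sect g [::] = g.
Proof. by apply: tm_ext => w; rewrite /sect drop0. Qed.

Lemma sect_id u : sect (@id (word d)) u = id.
Proof. by apply: tm_ext => w; rewrite /sect drop_size_cat. Qed.

Lemma state_sect g u : is_state g (sect g u).
Proof.
elim/last_ind: u => [|u x IH]; first by rewrite sect_nil; constructor.
by rewrite -cats1 sect_cat; constructor.
Qed.

Lemma sect_nseq g (x : 'I_d) n : sect g [:: x] = g -> sect g (nseq n x) = g.
Proof.
move=> H; elim: n => [|n IH]; first by rewrite sect_nil.
by change (nseq n.+1 x) with ([:: x] ++ nseq n x); rewrite sect_cat H IH.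
Qed.

Lemma act_inj (x : 'I_d) g1 g2 : is_aut g1 -> is_aut g2 ->
  (forall w, act_inf g1 w = act_inf g2 w) -> g1 = g2.
Proof.
move=> H1 H2 E; apply: tm_ext => u.
have e1 := act_mkseq (cat_iw u (fun _ => x)) (size u) H1.
have e2 := act_mkseq (cat_iw u (fun _ => x)) (size u) H2.
by rewrite mkseq_cat_iw_size in e1 e2; rewrite -e1 -e2 E.
Qed.

End Aut.

Section Cover.
Variable d : nat.

Lemma mkseqS (f : nat -> 'I_d) n : mkseq f n.+1 = rcons (mkseq f n) (f n).
Proof. by rewrite /mkseq -addn1 iotaD map_cat cats1 add0n. Qed.

Lemma size_le_sumn (T : seq (word d)) v : v \in T -> size v <= sumn (map size T).
Proof.
elim: T => //= a T IH; rewrite inE => /orP [/eqP -> | H]; first exact: leq_addr.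
by apply: leq_trans (IH H) _; apply: leq_addl.
Qed.

Lemma cover (T ls : seq (word d)) (W : iword d) :
  complete_subtree T -> leaves_list T ls ->
  exists j, j < size ls /\ nth [::] ls j = mkseq W (size (nth [::] ls j)).
Proof.
move=> [HT0 [_ HT2]] [_ Hls].
have exP : exists n, (fun n => mkseq W n \in T) n by exists 0.
have ubP : forall n, (fun n => mkseq W n \in T) n -> n <= sumn (map size T).
  by move=> n /= H; have := size_le_sumn H; rewrite size_mkseq.
case: (ex_maxnP exP ubP) => n Hn Hmax.
have [Hall | Hnone] := HT2 _ Hn.
  have := Hmax n.+1; rewrite mkseqS Hall => /(_ isT); by rewrite ltnn.
have Hin : mkseq W n \in ls by apply/Hls.
exists (index (mkseq W n) ls); split; first by rewrite index_mem.
by rewrite nth_index // size_mkseq.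
Qed.

End Cover.

Section Main.
Variable d : nat.
Variable G : tmap d -> Prop.
Hypothesis Hd : 2 <= d.
Hypothesis HG : aut_subgroup G.
Variable i : 'I_d.
Hypothesis Hpers : forall g, G g -> sect g [:: i] = g.
Hypothesis Hss : self_similar G.

Implicit Types (u v : word d) (w : iword d) (g h : tmap d).

Definition ci : iword d := fun _ => i.

Definition Dat (f : iword d -> iword d) X M t k :=
  forall w, f (cat_iw X (act_inf t (act_inf k w))) = cat_iw (nseq M i) w.

Lemma G_aut g : G g -> is_aut g.
Proof. by case: HG => H _; apply: H. Qed.

Lemma G_id : G id.
Proof. by case: HG => _ []. Qed.

Lemma G_comp g h : G g -> G h -> G (g \o h).
Proof. by case: HG => _ [] _ [] H _; apply: H. Qed.

Lemma G_inv g : G g -> exists h, G h /\ cancel g h /\ cancel h g.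
Proof. by case: HG => _ [] _ [] _ H; apply: H. Qed.

Lemma G_sect g u : G g -> G (sect g u).
Proof. by move=> H; apply: (Hss H); apply: state_sect. Qed.

Lemma act_surj g : G g -> forall W, exists w, act_inf g w = W.
Proof.
move=> Hg W; case: (G_inv Hg) => h [Hh [c1 c2]].
exists (act_inf h W).
have E : g \o h = id by apply: tm_ext => y; rewrite /= c2.
have H := act_comp (G_aut Hg) (G_aut Hh); rewrite E act_id in H.
by have /= E2 := congr1 (fun F => F W) H; rewrite -E2.
Qed.

Lemma act_inj_w g : G g -> injective (act_inf g).
Proof.
move=> Hg; case: (G_inv Hg) => h [Hh [c1 c2]].
apply: (@can_inj _ _ _ (act_inf h)) => w.
have E : h \o g = id by apply: tm_ext => y; rewrite /= c1.
have H := act_comp (G_aut Hh) (G_aut Hg); rewrite E act_id in H.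
by have /= E2 := congr1 (fun F => F w) H; rewrite -E2.
Qed.

Lemma refine f X M t k : Dat f X M t k -> G t -> G k -> forall n,
  Dat f (X ++ t (k (nseq n i))) (M + n) (sect t (k (nseq n i))) k.
Proof.
move=> D Ht Hk n w.
have := D (cat_iw (nseq n i) w).
rewrite (act_cat _ _ (G_aut Hk)) (sect_nseq _ (Hpers Hk)) (act_cat _ _ (G_aut Ht)).
by rewrite !cat_iw_cat nseqD.
Qed.

Lemma preimage f X M t k : Dat f X M t k -> f (cat_iw X (act_inf t (act_inf k ci))) = ci.
Proof. by move=> D; rewrite D cat_nseq_const. Qed.

Lemma A0 f X M1 M2 g1 g2 : injective f -> G g1 -> G g2 -> M1 <= M2 ->
  (forall w, f (cat_iw X (act_inf g1 w)) = cat_iw (nseq M1 i) w) ->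
  (forall w, f (cat_iw X (act_inf g2 w)) = cat_iw (nseq M2 i) w) -> g1 = g2.
Proof.
move=> Hf H1 H2 HM D1 D2.
have E : forall w, act_inf g1 (cat_iw (nseq (M2 - M1) i) w) = act_inf g2 w.
  move=> w; apply: (cat_iw_inj (u := X)); apply: Hf.
  by rewrite D1 D2 cat_iw_cat -nseqD subnKC.
case: (posnP (M2 - M1)) => Hj.
  apply: (act_inj i (G_aut H1) (G_aut H2)) => w.
  by rewrite -E Hj cat_iw0.
exfalso.
pose c := nth i (g1 [:: i]) 0.
have Hc : forall w, act_inf g2 w 0 = c.
  move=> w; rewrite -E /act_inf mkseq_cat_iw ?size_nseq //.
  rewrite /c; case: (M2 - M1) Hj => //= m _.
  rewrite take0.
  by apply: set_nth_default; rewrite (aut_size _ (G_aut H1)).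
have H0 : 0 < d by apply: leq_trans Hd.
have H1' : 1 < d by [].
pose o0 : 'I_d := Ordinal H0.
pose o1 : 'I_d := Ordinal H1'.
have [o [Ho]] : exists o : 'I_d, o != c /\ True.
  case: (eqVneq o0 c) => Ho; last by exists o0.
  exists o1; split => //; rewrite -Ho; apply/eqP => /(congr1 val) //.
case: (act_surj H2 (fun _ => o)) => w Hw.
by move: (Hc w); rewrite Hw => /eqP; rewrite (negbTE Ho).
Qed.

Lemma Aprime f X M1 M2 t1 k1 t2 k2 : injective f -> G t1 -> G k1 -> G t2 -> G k2 ->
  Dat f X M1 t1 k1 -> Dat f X M2 t2 k2 -> t1 \o k1 = t2 \o k2.
Proof.
move=> Hf Ht1 Hk1 Ht2 Hk2 D1 D2.
have D1' : forall w, f (cat_iw X (act_inf (t1 \o k1) w)) = cat_iw (nseq M1 i) w.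
  by move=> w; rewrite (act_comp (G_aut Ht1) (G_aut Hk1)) /= D1.
have D2' : forall w, f (cat_iw X (act_inf (t2 \o k2) w)) = cat_iw (nseq M2 i) w.
  by move=> w; rewrite (act_comp (G_aut Ht2) (G_aut Hk2)) /= D2.
case: (leqP M1 M2) => HM.
  by apply: (A0 Hf _ _ HM D1' D2'); apply: G_comp.
by symmetry; apply: (A0 Hf _ _ (ltnW HM) D2' D1'); apply: G_comp.
Qed.

Lemma Eq f X1 M1 t1 k1 X2 M2 t2 k2 : injective f -> G t1 -> G k1 -> G t2 -> G k2 ->
  Dat f X1 M1 t1 k1 -> Dat f X2 M2 t2 k2 ->
  exists a1 a2, sect t1 a1 \o k1 = sect t2 a2 \o k2.
Proof.
move=> Hf Ht1 Hk1 Ht2 Hk2 D1 D2.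
pose N := maxn (size X1) (size X2).
have R1 := refine D1 Ht1 Hk1 (N - size X1).
have R2 := refine D2 Ht2 Hk2 (N - size X2).
exists (k1 (nseq (N - size X1) i)), (k2 (nseq (N - size X2) i)).
set Y1 := X1 ++ _ in R1; set Y2 := X2 ++ _ in R2.
have S1 : size Y1 = N by rewrite /Y1 size_cat !(@aut_size _ _ _ (G_aut _)) // size_nseq subnKC // leq_maxl.
have S2 : size Y2 = N by rewrite /Y2 size_cat !(@aut_size _ _ _ (G_aut _)) // size_nseq subnKC // leq_maxr.
have P1 := preimage R1; have P2 := preimage R2.
have EY : Y1 = Y2.
  have /Hf := etrans P1 (esym P2); exact: (cat_iw_prefix_eq (etrans S1 (esym S2))).
rewrite EY in R1.
by apply: (Aprime Hf _ Hk1 _ Hk2 R1 R2); apply: G_sect.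
Qed.


Lemma ci_nseq n : cat_iw (nseq n i) ci = ci.
Proof. exact: cat_nseq_const. Qed.

Lemma through (s : iword d -> iword d) n (Tp us vs : seq (word d)) (sg : 'S_n) gs :
  complete_subtree Tp -> leaves_list Tp vs -> size vs = n -> (forall a, G (gs a)) ->
  (forall (a : 'I_n) w, s (cat_iw (nth [::] vs a) w) = cat_iw (nth [::] us (sg a)) (act_inf (gs a) w)) ->
  forall F X M k, Dat F X M id k -> G k ->
  exists (a : 'I_n) Y M' z, Dat F Y M' id k /\
    forall R, s (cat_iw Y R) = cat_iw (nth [::] us (sg a) ++ gs a z) (act_inf (sect (gs a) z) R).
Proof.
move=> cT lT sv Hgs Heq F X M k D Hk.
have [j [Hj Ey]] := cover (cat_iw X (act_inf k ci)) cT lT.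
have Hjn : j < n by rewrite -sv.
pose a := Ordinal Hjn.
set y := nth [::] vs j in Ey.
pose n0 := size y - size X.
have R := refine D G_id Hk n0; rewrite sect_id /= in R.
set Y := X ++ _ in R.
have SY : size y <= size Y.
  rewrite /Y size_cat (aut_size _ (G_aut Hk)) size_nseq.
  by rewrite -leq_subLR.
have EW : cat_iw X (act_inf k ci) = cat_iw Y (act_inf k ci).
  by rewrite -{1}(ci_nseq n0) (act_cat _ _ (G_aut Hk)) (sect_nseq _ (Hpers Hk)) cat_iw_cat.
have Ey' : y = take (size y) Y by rewrite {1}Ey EW mkseq_cat_iw.
exists a, Y, (M + n0), (drop (size y) Y); split => // R0.
rewrite -{1}(cat_take_drop (size y) Y) -Ey' -cat_iw_cat.
have -> : y = nth [::] vs a by [].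
rewrite Heq (act_cat _ _ (G_aut (Hgs a))) cat_iw_cat.
by [].
Qed.

Lemma propagate f s t X M k : G k -> Dat f X M id k -> in_V G t -> cancel s t -> cancel t s ->
  exists Y M' k', G k' /\ Dat (f \o s) Y M' id k'.
Proof.
move=> Hk D [n [Tm [Tp [us [vs [sg [gs [cTm [cTp [lTm [lTp [su [sv [Hgs Heq]]]]]]]]]]]]]] cst cts.
have [a [Y [M' [z [D' Ht]]]]] := through cTp lTp sv Hgs Heq D Hk.
exists (nth [::] us (sg a) ++ gs a z), M', (sect (gs a) z \o k); split.
  by apply: G_comp => //; apply: G_sect.
move=> w; rewrite act_id /= (act_comp (G_aut (G_sect _ (Hgs a))) (G_aut Hk)) /= -Ht cts.
by have := D' w; rewrite act_id.
Qed.

Lemma step f s n (Tp us vs : seq (word d)) (sg : 'S_n) gs X M k X' M' k' :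
  complete_subtree Tp -> leaves_list Tp vs -> size vs = n -> (forall a, G (gs a)) ->
  (forall (a : 'I_n) w, s (cat_iw (nth [::] vs a) w) = cat_iw (nth [::] us (sg a)) (act_inf (gs a) w)) ->
  injective f -> G k -> G k' -> Dat f X M id k -> Dat (f \o s) X' M' id k' ->
  exists (a : 'I_n) v, k = sect (gs a) v \o k'.
Proof.
move=> cT lT sv Hgs Heq Hf Hk Hk' D D'.
have [a [Y [M'' [z [D'' Hs]]]]] := through cT lT sv Hgs Heq D' Hk'.
have Df : Dat f (nth [::] us (sg a) ++ gs a z) M'' (sect (gs a) z) k'.
  by move=> w; rewrite -Hs; have := D'' w; rewrite act_id.
have [a1 [a2 E]] := Eq Hf G_id Hk (G_sect _ (Hgs a)) Hk' D Df.
rewrite sect_id -sect_cat in E.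
by exists a, (z ++ a2).
Qed.

Lemma data_V f : in_V G f -> exists X M k, G k /\ Dat f X M id k.
Proof.
move=> [n [Tm [Tp [us [vs [sg [gs [cTm [cTp [lTm [lTp [su [sv [Hgs Heq]]]]]]]]]]]]]].
have [j [Hj Eu]] := cover ci cTm lTm.
have Hjn : j < n by rewrite -su.
pose b := Ordinal Hjn.
pose a := (sg^-1)%g b.
have Hsa : sg a = b := permKV sg b.
case: (G_inv (Hgs a)) => k [Hk [c1 c2]].
exists (nth [::] vs a), (size (nth [::] us j)), k; split => // w.
have E : gs a \o k = id by apply: tm_ext => y; rewrite /= c2.
rewrite act_id /= Heq Hsa.
have := act_comp (G_aut (Hgs a)) (G_aut Hk); rewrite E act_id => E2.
have /= <- := congr1 (fun F => F w) E2.
by rewrite {1}Eu /ci mkseq_const.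
Qed.

Lemma iota_V y : G y -> in_V G (act_inf y).
Proof.
move=> Hy.
have Enth : forall k, nth ([::] : word d) [:: [::]] k = [::] by move=> [|[|k]].
have cT : complete_subtree [:: [::] : word d].
  split; first by rewrite inE.
  split; first by move=> v x; rewrite inE; case: v.
  by move=> v _; right => x; rewrite inE; case: v.
have lT : leaves_list [:: [::] : word d] [:: [::]].
  split => // v; split => [H|[]//]; split => // x; rewrite inE; by case: (v) H.
exists 1, [:: [::]], [:: [::]], [:: [::]], [:: [::]], 1%g, (fun _ => y).
do 6 (split => //).
split => // a w; by rewrite !Enth !cat_iw0.
Qed.


Variables (SV : seq (iword d -> iword d)) (SG : seq (tmap d)).
Hypothesis HSV : gen_set (in_V G) SV.
Hypothesis HSG : gen_set G SG.
Hypothesis Hfs : finite_state G.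

Lemma short_G t : G t -> exists B, short SG B t.
Proof.
move=> Ht; case: HSG => _ [_ H]; case: (H t Ht) => L [HL E].
by exists (size L), L.
Qed.

Lemma label_bound g : G g -> exists B, forall t, is_state g t -> short SG B t.
Proof.
move=> Hg; case: (Hfs Hg) => N [kf Hkf].
have [B HB] := @nat_bound (fun x B => is_state g (kf x) -> short SG B (kf x)) N
  (fun x B B' H P1 Hs => short_mono H (P1 Hs))
  (fun x _ => match classic (is_state g (kf x)) with
              | or_introl Hs => let: ex_intro B HB := short_G (Hss Hg Hs) in
                                ex_intro _ B (fun _ => HB)
              | or_intror Hn => ex_intro _ 0 (fun Hs => False_ind _ (Hn Hs))
              end).
exists B => t Ht; case: (Hkf t Ht) => x [Hx E].
by rewrite E in Ht *; apply: HB.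
Qed.

Lemma rep_bound n (gs : 'I_n -> tmap d) : (forall a, G (gs a)) ->
  exists B, forall a v, short SG B (sect (gs a) v).
Proof.
move=> Hgs.
have H1 : forall x, x < n -> exists B, forall a : 'I_n, nat_of_ord a = x -> forall v, short SG B (sect (gs a) v).
  move=> x Hx; have [B HB] := label_bound (Hgs (Ordinal Hx)).
  exists B => a Ha v; have -> : a = Ordinal Hx by apply: val_inj.
  by apply: HB; apply: state_sect.
have [B HB] := @nat_bound (fun x B => forall a : 'I_n, nat_of_ord a = x -> forall v, short SG B (sect (gs a) v)) n
  (fun x B B' H P1 a Ha v => short_mono H (P1 a Ha v)) H1.
by exists B => a v; apply: (HB a (ltn_ord a) a erefl v).
Qed.

Definition stepP (s : iword d -> iword d) B :=
  forall f X M k X' M' k', injective f -> G k -> G k' -> Dat f X M id k ->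
    Dat (f \o s) X' M' id k' -> exists t, short SG B t /\ k = t \o k'.

Lemma stepB s : in_V G s -> exists B, stepP s B.
Proof.
move=> [n [Tm [Tp [us [vs [sg [gs [cTm [cTp [lTm [lTp [su [sv [Hgs Heq]]]]]]]]]]]]]].
have [B HB] := rep_bound Hgs.
exists B => f X M k X' M' k' Hf Hk Hk' D D'.
have [a [v E]] := step cTp lTp sv Hgs Heq Hf Hk Hk' D D'.
by exists (sect (gs a) v); split.
Qed.

Lemma allB : exists B, forall s, List.In s SV -> stepP s B.
Proof.
apply: (@list_bound _ SV stepP).
  move=> s B B' H P1 f X M k X' M' k' Hf Hk Hk' D D'.
  have [t [Ht E]] := P1 f X M k X' M' k' Hf Hk Hk' D D'.
  by exists t; split => //; apply: short_mono H Ht.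
by move=> s Hs; apply: stepB; case: HSV => H _; apply: H.
Qed.

Definition invG g := epsilon (inhabits (@id (word d))) (fun h => G h /\ cancel g h /\ cancel h g).

Lemma invG_spec g : G g -> G (invG g) /\ cancel g (invG g) /\ cancel (invG g) g.
Proof. by move=> Hg; apply: (epsilon_spec (inhabits (@id (word d))) (fun h => G h /\ cancel g h /\ cancel h g)); apply: G_inv. Qed.

Definition kof f := epsilon (inhabits (@id (word d))) (fun k => G k /\ exists X M, Dat f X M id k).

Lemma kof_spec f : (exists X M k, G k /\ Dat f X M id k) ->
  G (kof f) /\ exists X M, Dat f X M id (kof f).
Proof.
move=> [X [M [k [Hk D]]]]; apply: (epsilon_spec (inhabits (@id (word d))) (fun k => G k /\ exists X M, Dat f X M id k)).
by exists k; split => //; exists X, M.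
Qed.

Definition rr f := invG (kof f).

Lemma invG_comp k k' t : G k -> G k' -> k = t \o k' -> invG k' = invG k \o t.
Proof.
move=> Hk Hk' E; apply: tm_ext => x.
have [_ [c1 c2]] := invG_spec Hk'; have [_ [c3 _]] := invG_spec Hk.
rewrite /= -[in RHS](c2 x).
have -> : t (k' (invG k' x)) = k (invG k' x) by rewrite E.
by rewrite c3.
Qed.

Lemma invG_invG g : G g -> invG (invG g) = g.
Proof.
move=> Hg; apply: tm_ext => x.
have [Hi [c1 c2]] := invG_spec Hg; have [_ [c3 c4]] := invG_spec Hi.
by rewrite -[X in invG (invG g) X](c1 x) c3.
Qed.

Definition Inv f := injective f /\ exists X M k, G k /\ Dat f X M id k.

Lemma r_step B (HB : forall s, List.In s SV -> stepP s B) f s :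
  Inv f -> List.In s SV -> Inv (f \o s) /\ wdist_le SG (rr f) (rr (f \o s)) B.
Proof.
move=> [Hf [X [M [k [Hk D]]]]] Hs.
case: HSV => HV [Hinv _].
have [t [Ht [cst cts]]] := Hinv s Hs.
have Ifs : Inv (f \o s).
  split; first by apply: inj_comp Hf (can_inj cst).
  exact: (propagate Hk D (HV t Ht) cst cts).
split => //.
have [Gkf [Xf [Mf Df]]] := kof_spec (ex_intro _ X (ex_intro _ M (ex_intro _ k (conj Hk D)))).
have [Gkfs [Xs [Ms Ds]]] := kof_spec (proj2 Ifs).
have [tau [[L [HL [HsL EL]]] E]] := HB s Hs f _ _ _ _ _ _ Hf Gkf Gkfs Df Ds.
exists L; split => //; split => //.
by rewrite /rr (invG_comp Gkf Gkfs E) EL.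
Qed.

Lemma r_chain B (HB : forall s, List.In s SV -> stepP s B) L :
  (forall s, List.In s L -> List.In s SV) -> forall f, Inv f ->
  wdist_le SG (rr f) (rr (f \o lprod L)) (B * size L).
Proof.
elim: L => [|a L IH] HL f If.
  by exists [::]; split => //.
have [If' W1] := r_step HB If (HL a (or_introl erefl)).
have W2 := IH (fun s hh => HL s (or_intror hh)) (f \o a) If'.
rewrite /= mulnS; exact: (wdist_trans W1 W2).
Qed.

Lemma lprod_inj L : (forall s, List.In s L -> List.In s SV) -> injective (lprod L).
Proof.
elim: L => [|a L IH] HL; first by move=> x y.
case: HSV => _ [Hinv _].
have [t [_ [c1 _]]] := Hinv a (HL a (or_introl erefl)).
exact: inj_comp (can_inj c1) (IH (fun s hh => HL s (or_intror hh))).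
Qed.

Lemma I_V f : in_V G f -> Inv f.
Proof.
move=> Hf; split; last exact: data_V.
case: HSV => _ [_ H]; case: (H f Hf) => L [HL ->].
exact: lprod_inj.
Qed.

Lemma lprod_G L : (forall s, List.In s L -> List.In s SG) -> G (lprod L).
Proof.
elim: L => [|a L IH] HL; first exact: G_id.
case: HSG => HG' _.
apply: G_comp; first by apply: HG'; apply: HL; left.
by apply: IH => s hh; apply: HL; right.
Qed.

Lemma actB : exists B, forall s, List.In s SG -> short SV B (act_inf s).
Proof.
apply: (@list_bound _ SG (fun s B => short SV B (act_inf s))); first by move=> x B B' H; apply: short_mono.
move=> s Hs; case: HSG => HG' _.
have Hv := iota_V (HG' s Hs).
case: HSV => _ [_ H]; case: (H _ Hv) => L [HL E].
by exists (size L), L.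
Qed.

Lemma act_chain B2 (HB2 : forall s, List.In s SG -> short SV B2 (act_inf s)) L :
  (forall s, List.In s L -> List.In s SG) -> short SV (B2 * size L) (act_inf (lprod L)).
Proof.
elim: L => [|a L IH] HL.
  by exists [::]; split => //; split => //; rewrite /= act_id.
have [L1 [H1 [S1 E1]]] := HB2 a (HL a (or_introl erefl)).
have [L2 [H2 [S2 E2]]] := IH (fun s hh => HL s (or_intror hh)).
exists (L1 ++ L2); split.
  by move=> s Hs; case: (List.in_app_or _ _ _ Hs) => ?; [apply: H1 | apply: H2].
case: HSG => HG' _.
have Ga : G a by apply: HG'; apply: HL; left.
have GL : G (lprod L) by apply: lprod_G => s hh; apply: HL; right.
split; first by rewrite size_cat mulnS leq_add.
by rewrite /= (act_comp (G_aut Ga) (G_aut GL)) lprod_cat E1 E2.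
Qed.

Lemma main_res : exists r, quasi_retraction (in_V G) SV G SG r.
Proof.
have [B HB] := allB; have [B2 HB2] := actB.
exists rr, (B + B2).+1, 0, (@act_inf d).
split => //.
split.
  by move=> x Hx; have [Gk _] := kof_spec (data_V Hx); exact: (invG_spec Gk).1.
split; first by move=> y Hy; apply: iota_V.
split.
  move=> x x' n Hx Hx' [L [HL [Hn E]]].
  rewrite E; apply: wdist_mono (r_chain HB HL (I_V Hx)).
  rewrite addn0; apply: leq_mul => //.
  by apply: leq_trans (leq_addr B2 B) (leqnSn _).
split.
  move=> y y' n Hy Hy' [L [HL [Hn E]]].
  have [L' [HL' [Hs' E']]] := act_chain HB2 HL.
  exists L'; split => //; split.
    rewrite addn0; apply: (leq_trans Hs'); apply: leq_mul => //.
    by apply: leq_trans (leq_addl B B2) (leqnSn _).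
  by rewrite E (act_comp (G_aut Hy) (G_aut (lprod_G HL))) E'.
move=> y Hy.
have [Gi [c1 c2]] := invG_spec Hy.
have D0 : Dat (act_inf y) [::] 0 id (invG y).
  move=> w; rewrite cat_iw0 act_id /= cat_iw0.
  have E : y \o invG y = id by apply: tm_ext => z; rewrite /= c2.
  have := act_comp (G_aut Hy) (G_aut Gi); rewrite E act_id => E2.
  by have /= <- := congr1 (fun F => F w) E2.
have [Gk [X [M Dk]]] := kof_spec (ex_intro _ [::] (ex_intro _ 0 (ex_intro _ (invG y) (conj Gi D0)))).
have [a1 [a2 E]] := Eq (act_inj_w Hy) G_id Gi G_id Gk D0 Dk.
rewrite !sect_id in E.
have Ek : kof (act_inf y) = invG y by [].
rewrite /rr Ek invG_invG //.
by exists [::].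
Qed.

End Main.

Theorem proposition5p5 (d : nat) (G : tmap d -> Prop) :
  (2 <= d)%N ->
  aut_subgroup G -> fin_gen G -> persistent G -> finite_state G -> self_similar G ->
  forall (SV : seq (iword d -> iword d)) (SG : seq (tmap d)),
    gen_set (in_V G) SV -> gen_set G SG ->
    exists r : (iword d -> iword d) -> tmap d, quasi_retraction (in_V G) SV G SG r.
Proof.
move=> Hd HG _ [i Hpers] Hfs Hss SV SG HSV HSG.
exact: (main_res Hd HG Hpers Hss HSV HSG Hfs).
Qed.
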